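(* Let $g:\mathbb{R}^N\to\mathbb{R}\cup\{+\infty\}$ be proper and lower semi-continuous, let $f:\mathbb{R}^N\to\mathbb{R}$ be continuously differentiable such that, for some $\mathbf{L}\in\mathbb{S}_{++}(N)$, the gradient of $f\circ\mathbf{L}^{-1/2}$ is $1$-Lipschitz continuous, and assume $f^g:=f+g$ is bounded from below. Fix $a>0$, $x_0\in\mathbb{R}^N$, and a sequence of matrices $\mathbf{D}_k\in\mathbb{R}^{N\times R}$. For $k\ge0$ and $\boldsymbol\beta\in\mathbb{R}^R$ let $y^{(\boldsymbol\beta)}_k:=x_k+\mathbf{D}_k\boldsymbol\beta$ and $\ell(x;y):=g(x)+f(y)+\langle\nabla f(y),x-y\rangle$. Suppose the sequences $(x_k)_{k}$, $(\boldsymbol\beta_k)_k$, and symmetric matrices $(\mathbf{L}_k)_k$, $(\mathbf{T}_k)_k$ satisfy for all $k\ge0$: $$(x_{k+1},\boldsymbol\beta_k)\in\operatorname*{argmin}_{x\in\mathbb{R}^N}\min_{\boldsymbol\beta\in\mathbb{R}^R}\ \ell(x;y_k^{(\boldsymbol\beta)})+\tfrac12\|x-y_k^{(\boldsymbol\beta)}\|_{\mathbf{T}_k}^2,$$ $\mathbf{T}_k-\mathbf{L}_k-a\mathbf{I}\in\mathbb{S}_+(N)$, and $$f(x_{k+1})\le f(y_k^{(\boldsymbol\beta_k)})+\langle\nabla f(y_k^{(\boldsymbol\beta_k)}),x_{k+1}-y_k^{(\boldsymbol\beta_k)}\rangle+\tfrac12\|x_{k+1}-y_k^{(\boldsymbol\beta_k)}\|_{\mathbf{L}_k}^2.$$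 Suppose $(\mathbf{T}_k)_{k\in\mathbb{N}}$ is bounded. Then the sequence $(f^g(x_k))_{k\in\mathbb{N}}$ is non-increasing and every limit point of $(x_{k+1})_{k\in\mathbb{N}}$ is a stationary point of $f^g$.
   Context: $\mathbb{S}_{+}(N)$ (resp. $\mathbb{S}_{++}(N)$) denotes the set of symmetric positive semi-definite (resp. positive definite) $N\times N$ real matrices; $\mathbf{I}$ is the identity; $\|x\|_{\mathbf{V}}^2:=\langle x,\mathbf{V}x\rangle$. The Fréchet subdifferential $\hat\partial h(\bar x)$ of $h:\mathbb{R}^N\to\mathbb{R}\cup\{+\infty\}$ at $\bar x\in\operatorname{dom}h$ is the set of $v$ with $\liminf_{x\to\bar x,x\ne\bar x}\frac{h(x)-h(\bar x)-\langle v,x-\bar x\rangle}{\|x-\bar x\|}\ge0$; the limiting subdifferential $\partial h(\bar x)$ is the set of $v$ for which there exist $x_k\to\bar x$ with $h(x_k)\to h(\bar x)$ and $v_k\in\hat\partial h(x_k)$ with $v_k\to v$ (both empty outside $\operatorname{dom}h$). A stationary point of $h$ is a point $\bar x\in\operatorname{dom} h$ with $0\in\partial h(\bar x)$. *)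

(* Defs.v *)
From HB Require Import structures.
From mathcomp Require Import all_boot all_order all_algebra.
From mathcomp Require Import reals constructive_ereal.
Set Implicit Arguments. Unset Strict Implicit. Unset Printing Implicit Defensive.
Import Order.TTheory GRing.Theory Num.Theory.
Local Open Scope ring_scope.

Section Defs.
Context {R : realType} {N : nat}.

Definition dotp (x y : 'cV[R]_N) : R := (x^T *m y) 0 0.
Definition enorm (x : 'cV[R]_N) : R := Num.sqrt (dotp x x).
(* ||x||_V^2 := <x, V x> *)
Definition qnorm (V : 'M[R]_N) (x : 'cV[R]_N) : R := dotp x (V *m x).

Definition sym_mx (A : 'M[R]_N) : Prop := A^T = A.
Definition psd (A : 'M[R]_N) : Prop := sym_mx A /\ forall x, 0 <= qnorm A x.
Definition pd (A : 'M[R]_N) : Prop :=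
  sym_mx A /\ forall x : 'cV[R]_N, x != 0 -> 0 < qnorm A x.

Definition is_gradient (f : 'cV[R]_N -> R) (gf : 'cV[R]_N -> 'cV[R]_N) : Prop :=
  forall x (eps : R), 0 < eps -> exists2 delta : R, 0 < delta &
    forall y, enorm (y - x) < delta ->
      `|f y - f x - dotp (gf x) (y - x)| <= eps * enorm (y - x).

Definition vcontinuous (F : 'cV[R]_N -> 'cV[R]_N) : Prop :=
  forall x (eps : R), 0 < eps -> exists2 delta : R, 0 < delta &
    forall y, enorm (y - x) < delta -> enorm (F y - F x) < eps.

Definition seq_cvg (u : nat -> 'cV[R]_N) (l : 'cV[R]_N) : Prop :=
  forall eps : R, 0 < eps -> exists n, forall k, (n <= k)%N -> enorm (u k - l) < eps.

Definition limit_point (u : nat -> 'cV[R]_N) (l : 'cV[R]_N) : Prop :=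
  exists phi : nat -> nat, (forall n, (phi n < phi n.+1)%N) /\
    seq_cvg (fun n => u (phi n)) l.

Definition proper_fun (g : 'cV[R]_N -> \bar R) : Prop :=
  (forall x, g x != -oo%E) /\ exists x, g x \is a fin_num.

Definition lsc (g : 'cV[R]_N -> \bar R) : Prop :=
  forall x (t : R), (t%:E < g x)%E -> exists2 delta : R, 0 < delta &
    forall y, enorm (y - x) < delta -> (t%:E < g y)%E.

(* Frechet subdifferential: v \in \hat\partial h(xbar) (liminf >= 0 unfolded) *)
Definition frechet_subdiff (h : 'cV[R]_N -> \bar R) (xbar v : 'cV[R]_N) : Prop :=
  h xbar \is a fin_num /\
  forall eps : R, 0 < eps -> exists2 delta : R, 0 < delta &
    forall x, 0 < enorm (x - xbar) < delta ->
      (h xbar + (dotp v (x - xbar) - eps * enorm (x - xbar))%:E <= h x)%E.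

Definition limiting_subdiff (h : 'cV[R]_N -> \bar R) (xbar v : 'cV[R]_N) : Prop :=
  h xbar \is a fin_num /\
  exists (xs vs : nat -> 'cV[R]_N),
    [/\ seq_cvg xs xbar,
        (forall eps : R, 0 < eps -> exists n, forall k, (n <= k)%N ->
            h (xs k) \is a fin_num /\ `|fine (h (xs k)) - fine (h xbar)| < eps),
        (forall k, frechet_subdiff h (xs k) (vs k)) &
        seq_cvg vs v].

Definition stationary (h : 'cV[R]_N -> \bar R) (xbar : 'cV[R]_N) : Prop :=
  h xbar \is a fin_num /\ limiting_subdiff h xbar 0.

End Defs.

(* Main.v *)
Require Import Defs.
From HB Require Import structures.
From mathcomp Require Import all_boot all_order all_algebra.
From mathcomp Require Import reals constructive_ereal ring lra.
Import Order.TTheory GRing.Theory Num.Theory.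
Local Open Scope ring_scope.


Section Aux.
Context {R : realType}.
Context {N : nat}.
Implicit Types x y w : 'cV[R]_N.

Lemma dotpE x y : dotp x y = \sum_i x i 0 * y i 0.
Proof. by rewrite /dotp !mxE; apply: eq_bigr => i _; rewrite mxE. Qed.

Lemma dotpDl x y w : dotp (x + y) w = dotp x w + dotp y w.
Proof. rewrite !dotpE -big_split; apply: eq_bigr => i _; rewrite !mxE /=; ring. Qed.
Lemma dotpDr x y w : dotp w (x + y) = dotp w x + dotp w y.
Proof. rewrite !dotpE -big_split; apply: eq_bigr => i _; rewrite !mxE /=; ring. Qed.
Lemma dotpNl x w : dotp (- x) w = - dotp x w.
Proof. rewrite !dotpE -sumrN; apply: eq_bigr => i _; rewrite !mxE /=; ring. Qed.
Lemma dotpNr x w : dotp w (- x) = - dotp w x.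
Proof. rewrite !dotpE -sumrN; apply: eq_bigr => i _; rewrite !mxE /=; ring. Qed.
Lemma dotpC x w : dotp x w = dotp w x.
Proof. rewrite !dotpE; apply: eq_bigr => i _; ring. Qed.
Lemma dotp0r x : dotp x 0 = 0.
Proof. rewrite !dotpE big1 // => i _; rewrite !mxE /=; ring. Qed.
Lemma dotpZr (c : R) x w : dotp x (c *: w) = c * dotp x w.
Proof. rewrite !dotpE mulr_sumr; apply: eq_bigr => i _; rewrite !mxE /=; ring. Qed.
Lemma dotp_ge0 x : 0 <= dotp x x.
Proof. rewrite dotpE; apply: sumr_ge0 => i _; rewrite -expr2; exact: sqr_ge0. Qed.

Lemma dotp_mul x y (T : 'M[R]_N) : dotp x (T *m y) = dotp (T^T *m x) y.
Proof. by rewrite /dotp trmx_mul trmxK mulmxA. Qed.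

Definition sn w := \sum_i `|w i 0|.

Lemma sn_ge0 w : 0 <= sn w.
Proof. by apply: sumr_ge0 => i _. Qed.
Lemma snD x y : sn (x + y) <= sn x + sn y.
Proof. rewrite /sn -big_split; apply: ler_sum => i _; rewrite mxE; exact: ler_normD. Qed.
Lemma snN x : sn (- x) = sn x.
Proof. by rewrite /sn; apply: eq_bigr => i _; rewrite mxE normrN. Qed.
Lemma snB x y : sn (x - y) = sn (y - x).
Proof. by rewrite -snN opprB. Qed.
Lemma snB3 x y w : sn (x - y) <= sn (x - w) + sn (w - y).
Proof. have -> : x - y = (x - w) + (w - y) by rewrite addrA subrK. exact: snD. Qed.

Lemma enorm_ge0 w : 0 <= enorm w.
Proof. exact: sqrtr_ge0. Qed.

Lemma le_enorm_sn w : enorm w <= sn w.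
Proof.
rewrite /enorm -(ger0_norm (sn_ge0 w)) -sqrtr_sqr ler_sqrt ?sqr_ge0 //.
rewrite dotpE expr2 /sn mulr_suml; apply: ler_sum => i _.
apply: le_trans (_ : _ <= `|w i 0| * `|w i 0|) _; first by rewrite -normrM ler_norm.
apply: ler_wpM2l => //.
by rewrite (bigD1 i) //= lerDl sumr_ge0.
Qed.

Lemma coord_le_enorm w i : `|w i 0| <= enorm w.
Proof.
rewrite /enorm -sqrtr_sqr ler_sqrt ?dotp_ge0 // dotpE (bigD1 i) //= -expr2 lerDl.
by apply: sumr_ge0 => j _; rewrite -expr2 sqr_ge0.
Qed.

Lemma sn_le_enorm w : sn w <= N%:R * enorm w.
Proof.
have <- : \sum_(i < N) enorm w = N%:R * enorm w by rewrite sumr_const card_ord mulr_natl.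
apply: ler_sum => i _.
exact: coord_le_enorm.
Qed.

Lemma dotp_le x y : `|dotp x y| <= sn x * sn y.
Proof.
rewrite dotpE /sn mulr_suml; apply: le_trans (ler_norm_sum _ _ _) _.
apply: ler_sum => i _; rewrite normrM; apply: ler_wpM2l => //.
by rewrite (bigD1 i) //= lerDl sumr_ge0.
Qed.

Lemma sn_mulmx (T : 'M[R]_N) (C : R) w : (forall i j, `|T i j| <= C) ->
  sn (T *m w) <= C * N%:R * sn w.
Proof.
move=> HC.
have -> : C * N%:R * sn w = \sum_(i < N) \sum_(j < N) C * `|w j 0|.
  rewrite sumr_const card_ord /sn mulr_sumr -sumrMnl.
  by apply: eq_bigr => j _; rewrite -mulr_natr; ring.
apply: ler_sum => i _; rewrite mxE; apply: le_trans (ler_norm_sum _ _ _) _.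
apply: ler_sum => j _; rewrite normrM; exact: ler_wpM2r.
Qed.

Lemma qnorm_le (T : 'M[R]_N) (C : R) w : (forall i j, `|T i j| <= C) ->
  `|qnorm T w| <= C * N%:R * sn w * sn w.
Proof.
move=> HC; rewrite /qnorm; apply: le_trans (dotp_le _ _) _.
rewrite mulrC; apply: ler_wpM2r; [exact: sn_ge0 | exact: sn_mulmx].
Qed.

Lemma qnormB (A B : 'M[R]_N) w : qnorm (A - B) w = qnorm A w - qnorm B w.
Proof. by rewrite /qnorm mulmxBl dotpDr dotpNr. Qed.

Lemma qnorm_scalar (a : R) w : qnorm a%:M w = a * dotp w w.
Proof. by rewrite /qnorm mul_scalar_mx dotpZr. Qed.

Lemma qnorm0 (T : 'M[R]_N) : qnorm T 0 = 0.
Proof. by rewrite /qnorm mulmx0 dotp0r. Qed.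

Lemma qnorm_expand (T : 'M[R]_N) u d : sym_mx T ->
  qnorm T (u + d) = qnorm T u + qnorm T d + 2 * dotp (T *m d) u.
Proof.
move=> sT; rewrite /qnorm mulmxDr !dotpDl !dotpDr.
rewrite [dotp d (T *m u)]dotp_mul sT [dotp u (T *m d)]dotpC; ring.
Qed.

End Aux.


Section TZ.
Context {R : realType}.

Definition tz (u : nat -> R) := forall e, 0 < e -> exists n, forall k, (n <= k)%N -> `|u k| < e.

Lemma tz_le {u v : nat -> R} : tz u -> (forall k, `|v k| <= `|u k|) -> tz v.
Proof.
move=> hu hle e e0; have [n hn] := hu e e0; exists n => k kn.
exact: le_lt_trans (hle k) (hn k kn).
Qed.

Lemma tz_add {u v : nat -> R} : tz u -> tz v -> tz (fun k => u k + v k).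
Proof.
move=> hu hv e e0; have e2 : 0 < e / 2 by lra.
have [n1 h1] := hu _ e2; have [n2 h2] := hv _ e2.
exists (maxn n1 n2) => k kn; apply: le_lt_trans (ler_normD _ _) _.
have := h1 k (leq_trans (leq_maxl _ _) kn); have := h2 k (leq_trans (leq_maxr _ _) kn).
lra.
Qed.

Lemma tz_scale (c : R) {u : nat -> R} : tz u -> tz (fun k => c * u k).
Proof.
move=> hu e e0; have c1 : 0 < `|c| + 1 by have := normr_ge0 c; lra.
have [n hn] := hu (e / (`|c| + 1)) (divr_gt0 e0 c1); exists n => k kn.
rewrite normrM; have := hn k kn; rewrite ltr_pdivlMr // => h.
have := normr_ge0 (u k); have := normr_ge0 c; nra.
Qed.

Lemma tz_mul {u v : nat -> R} : tz u -> tz v -> tz (fun k => u k * v k).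
Proof.
move=> hu hv e e0.
have [n1 h1] := hu 1 ltr01; have [n2 h2] := hv _ e0.
exists (maxn n1 n2) => k kn; rewrite normrM.
have := h1 k (leq_trans (leq_maxl _ _) kn); have := h2 k (leq_trans (leq_maxr _ _) kn).
have := normr_ge0 (u k); have := normr_ge0 (v k); nra.
Qed.

Lemma tz_sub (phi : nat -> nat) {u : nat -> R} : (forall n, (n <= phi n)%N) -> tz u ->
  tz (fun n => u (phi n)).
Proof.
move=> hphi hu e e0; have [n hn] := hu e e0; exists n => k kn.
exact: hn (leq_trans kn (hphi k)).
Qed.

Lemma tz_upper {w U : nat -> R} :
  (forall e, 0 < e -> exists n, forall k, (n <= k)%N -> - e < w k) ->
  (forall k, w k <= U k) -> tz U -> tz w.
Proof.
move=> hl hU tU e e0; have [n1 h1] := hl e e0; have [n2 h2] := tU e e0.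
exists (maxn n1 n2) => k kn.
have := h1 k (leq_trans (leq_maxl _ _) kn); have := h2 k (leq_trans (leq_maxr _ _) kn).
have := hU k; rewrite ltr_norml => h3 h4 h5; move: h4 => /andP[h4 h6].
rewrite ltr_norml; apply/andP; split; lra.
Qed.

Context {N : nat}.

Lemma cvg_tz (u : nat -> 'cV[R]_N) l : seq_cvg u l <-> tz (fun k => enorm (u k - l)).
Proof.
split=> h e e0; have [n hn] := h e e0; exists n => k kn; have := hn k kn;
by rewrite ger0_norm ?enorm_ge0.
Qed.

Lemma cvg_tz_sn (u : nat -> 'cV[R]_N) l : seq_cvg u l -> tz (fun k => sn (u k - l)).
Proof.
move=> /cvg_tz h; apply: (tz_le (tz_scale N%:R h)) => k.
rewrite !ger0_norm ?sn_ge0 ?mulr_ge0 ?enorm_ge0 //; exact: sn_le_enorm.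
Qed.

Lemma tz_sn_cvg (u : nat -> 'cV[R]_N) l : tz (fun k => sn (u k - l)) -> seq_cvg u l.
Proof.
move=> h; apply/cvg_tz; apply: tz_le h _ => k.
rewrite !ger0_norm ?sn_ge0 ?enorm_ge0 //; exact: le_enorm_sn.
Qed.

Lemma vcont_cvg (F : 'cV[R]_N -> 'cV[R]_N) (u : nat -> 'cV[R]_N) l :
  vcontinuous F -> seq_cvg u l -> seq_cvg (fun k => F (u k)) (F l).
Proof.
move=> hF hu e e0; have [d d0 hd] := hF l e e0; have [n hn] := hu d d0.
by exists n => k kn; apply: hd; apply: hn.
Qed.

Lemma f_cont (f : 'cV[R]_N -> R) gf : is_gradient f gf -> forall x e, 0 < e ->
  exists2 d, 0 < d & forall y, enorm (y - x) < d -> `|f y - f x| < e.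
Proof.
move=> hg x e e0; have [d1 d10 hd1] := hg x 1 ltr01.
set K := 1 + sn (gf x) * N%:R.
have K0 : 0 < K by rewrite /K; have := sn_ge0 (gf x); have : (0:R) <= N%:R by []; nra.
exists (Num.min d1 (e / K)); first by rewrite lt_min d10 divr_gt0.
move=> y; rewrite lt_min => /andP[y1 y2].
have h1 := hd1 y y1; have h2 := dotp_le (gf x) (y - x).
have h3 := sn_le_enorm (y - x); have h4 := sn_ge0 (gf x).
have h5 := enorm_ge0 (y - x).
have h6 : `|f y - f x| <= K * enorm (y - x).
  have := ler_normD (f y - f x - dotp (gf x) (y - x)) (dotp (gf x) (y - x)).
  rewrite subrK => h7; apply: le_trans h7 _; rewrite /K mulrDl mul1r.
  apply: lerD; first by rewrite mul1r in h1.
  apply: le_trans h2 _; rewrite -mulrA; exact: ler_wpM2l.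
apply: le_lt_trans h6 _; by rewrite mulrC -ltr_pdivlMr.
Qed.

Lemma f_cvg (f : 'cV[R]_N -> R) gf (u : nat -> 'cV[R]_N) l : is_gradient f gf ->
  seq_cvg u l -> tz (fun k => f (u k) - f l).
Proof.
move=> hg hu e e0; have [d d0 hd] := f_cont f gf hg l e e0; have [n hn] := hu d d0.
by exists n => k kn; apply: hd; apply: hn.
Qed.

End TZ.
Arguments cvg_tz {R N u l}.
Arguments cvg_tz_sn {R N u l}.
Arguments tz_sn_cvg {R N u l}.
Arguments vcont_cvg {R N F u l}.
Arguments f_cvg {R N f gf u l}.


Lemma tz_sqrt {R : realType} (u : nat -> R) : tz u -> (forall k, 0 <= u k) ->
  tz (fun k => Num.sqrt (u k)).
Proof.
move=> hu h0 e e0; have [n hn] := hu (e ^+ 2) (exprn_gt0 2 e0); exists n => k kn.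
rewrite ger0_norm ?sqrtr_ge0 // -(gtr0_norm e0) -sqrtr_sqr ltr_sqrt ?exprn_gt0 //.
by have := hn k kn; rewrite ger0_norm.
Qed.

Section Main.
Context {R : realType} {N M : nat}
  (f : 'cV[R]_N -> R) (gf : 'cV[R]_N -> 'cV[R]_N) (g : 'cV[R]_N -> \bar R)
  (a : R) (x : nat -> 'cV[R]_N) (beta : nat -> 'cV[R]_M) (D : nat -> 'M[R]_(N, M))
  (Lk Tk : nat -> 'M[R]_N) (m C : R).
Context (Hprop : proper_fun g) (Hlsc : lsc g) (Hgrad : is_gradient f gf)
  (Hcont : vcontinuous gf) (Hbelow : forall y, (m%:E <= (f y)%:E + g y)%E)
  (Ha : 0 < a) (Hsym : forall k, sym_mx (Lk k) /\ sym_mx (Tk k))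
  (Hmin : forall k y b,
     (g (x k.+1) + (f (x k + D k *m beta k) + dotp (gf (x k + D k *m beta k)) (x k.+1 - (x k + D k *m beta k))
       + 2^-1 * qnorm (Tk k) (x k.+1 - (x k + D k *m beta k)))%:E <=
      g y + (f (x k + D k *m b) + dotp (gf (x k + D k *m b)) (y - (x k + D k *m b))
       + 2^-1 * qnorm (Tk k) (y - (x k + D k *m b)))%:E)%E)
  (Hpsd : forall k, psd (Tk k - Lk k - a%:M))
  (Hf : forall k, f (x k.+1) <= f (x k + D k *m beta k) + dotp (gf (x k + D k *m beta k)) (x k.+1 - (x k + D k *m beta k))
        + 2^-1 * qnorm (Lk k) (x k.+1 - (x k + D k *m beta k)))
  (HC : forall k i j, `|Tk k i j| <= C).

Let z k := x k + D k *m beta k.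
Let d k := x k.+1 - z k.
Let Fe y := ((f y)%:E + g y)%E.
Let gr y := fine (g y).
Let P k y b := f (x k + D k *m b) + dotp (gf (x k + D k *m b)) (y - (x k + D k *m b))
       + 2^-1 * qnorm (Tk k) (y - (x k + D k *m b)).

Lemma gnm y : g y != -oo%E.
Proof. by case: Hprop. Qed.

Lemma gfin k : g (x k.+1) \is a fin_num.
Proof.
have [y0 hy0] := Hprop.2; have := Hmin k y0 (beta k).
rewrite fin_numE gnm /=; apply: contraTN => /eqP ->.
by rewrite -(fineK hy0) -EFinD.
Qed.

Lemma gE k : g (x k.+1) = (gr (x k.+1))%:E.
Proof. by rewrite /gr fineK // gfin. Qed.

Lemma Hmin_real k y b : g y \is a fin_num ->
  gr (x k.+1) + P k (x k.+1) (beta k) <= gr y + P k y b.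
Proof.
move=> hy; have := Hmin k y b; rewrite gE -(fineK hy) -!EFinD lee_fin.
by rewrite /P.
Qed.


Lemma P0 k : P k (x k) 0 = f (x k).
Proof. by rewrite /P mulmx0 addr0 subrr dotp0r qnorm0 mulr0 !addr0. Qed.

Lemma dd_ge0 k : 0 <= a / 2 * dotp (d k) (d k).
Proof. apply: mulr_ge0; [have := Ha; lra | exact: dotp_ge0]. Qed.

Lemma fP k : f (x k.+1) + a / 2 * dotp (d k) (d k) <= P k (x k.+1) (beta k).
Proof.
have := Hf k; have [_ hp] := Hpsd k; have := hp (d k).
rewrite !qnormB qnorm_scalar /P /d /z; lra.
Qed.

Lemma desc k : ((f (x k.+1) + a / 2 * dotp (d k) (d k))%:E + g (x k.+1) <= Fe (x k))%E.
Proof.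
case hk: (g (x k) == +oo%E).
  by rewrite /Fe (eqP hk) addey // leey.
have hfin : g (x k) \is a fin_num by rewrite fin_numE gnm hk.
have := Hmin_real k (x k) 0 hfin; rewrite P0 => h1.
have h2 := fP k.
rewrite gE /Fe -(fineK hfin) -!EFinD lee_fin; move: h1; rewrite /gr; lra.
Qed.

Lemma part1 k : (Fe (x k.+1) <= Fe (x k))%E.
Proof.
apply: le_trans (desc k); rewrite /Fe gE -!EFinD lee_fin.
have := dd_ge0 k; lra.
Qed.

Let Fr k := f (x k.+1) + gr (x k.+1).

Lemma desc_r k : Fr k.+1 + a / 2 * dotp (d k.+1) (d k.+1) <= Fr k.
Proof. have := desc k.+1; rewrite /Fe !gE -!EFinD lee_fin /Fr; lra. Qed.

Lemma Fr_ge k : m <= Fr k.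
Proof. by have := Hbelow (x k.+1); rewrite gE -EFinD lee_fin. Qed.

Lemma Fr_mono n k : (n <= k)%N -> Fr k <= Fr n.
Proof.
move=> /subnK <-; elim: (k - n)%N => [|j IH]; rewrite ?add0n // addSn.
apply: le_trans _ IH; have := desc_r (j + n); have := dd_ge0 (j + n).+1; lra.
Qed.


Lemma dd_tz : tz (fun k => dotp (d k) (d k)).
Proof.
set E : classical_sets.set R := fun r => exists k, r = - Fr k.
have hE : classical_sets.has_sup E.
  split; first by exists (- Fr 0); exists 0%N.
  by exists (- m) => r [k ->]; rewrite lerN2; exact: Fr_ge.
move=> e e0.
have a2 : 0 < a / 2 by have := Ha; lra.
have ea : 0 < a / 2 * e by apply: mulr_gt0.
have [r [n ->] hn] := sup_adherent ea hE.
exists n.+1 => k kn.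
have hub j : - Fr j <= sup E.
  exact: (sup_upper_bound hE (ex_intro _ j erefl)).
case: k kn => [//|k] kn.
have h1 := desc_r k; have h2 := @Fr_mono n k kn; have h3 := hub k.+1.
rewrite ger0_norm ?dotp_ge0 //.
have : a / 2 * dotp (d k.+1) (d k.+1) < a / 2 * e by lra.
by rewrite ltr_pM2l.
Qed.

Lemma d_tz : tz (fun k => sn (d k)).
Proof.
have h : tz (fun k => enorm (d k)) by apply: tz_sqrt dd_tz _ => k; exact: dotp_ge0.
apply: tz_le (tz_scale N%:R h) _ => k.
rewrite !ger0_norm ?sn_ge0 ?mulr_ge0 ?enorm_ge0 //; exact: sn_le_enorm.
Qed.


Lemma qnorm_bound k w : `|qnorm (Tk k) w| <= (`|C| * N%:R * N%:R * N%:R) * enorm w ^+ 2.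
Proof.
have h1 := qnorm_le (Tk k) C w (HC k).
apply: le_trans h1 _.
have hs : sn w * sn w <= (N%:R * enorm w) * (N%:R * enorm w).
  by apply: ler_pM; rewrite ?sn_ge0 ?sn_le_enorm.
have hc : C * N%:R <= `|C| * N%:R by apply: ler_wpM2r => //; exact: ler_norm.
rewrite -mulrA; apply: le_trans (ler_wpM2r (mulr_ge0 (sn_ge0 w) (sn_ge0 w)) hc) _.
have -> : `|C| * N%:R * N%:R * N%:R * enorm w ^+ 2 =
   (`|C| * N%:R) * ((N%:R * enorm w) * (N%:R * enorm w)) by rewrite expr2; ring.
by apply: ler_wpM2l => //; apply: mulr_ge0.
Qed.

Lemma frechet k : frechet_subdiff Fe (x k.+1) (gf (x k.+1) - gf (z k) - Tk k *m d k).
Proof.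
split; first by rewrite /Fe gE -EFinD.
move=> eps eps0.
have e2 : 0 < eps / 2 by lra.
have [d1 d10 hd1] := Hgrad (x k.+1) (eps / 2) e2.
set K' := `|C| * N%:R * N%:R * N%:R.
have K'0 : 0 <= K' by rewrite /K' !mulr_ge0.
have K0 : 0 < K' + 1 by lra.
exists (Num.min d1 (eps / 2 / (K' + 1))); first by rewrite lt_min d10 /= !divr_gt0.
move=> y /andP[_ hy]; move: hy; rewrite lt_min => /andP[hy1 hy2].
case hgy: (g y == +oo%E).
  by rewrite /Fe (eqP hgy) addey // leey.
have hfin : g y \is a fin_num by rewrite fin_numE gnm hgy.
have hmin := Hmin_real k y (beta k) hfin.
rewrite /Fe gE -(fineK hfin) -!EFinD lee_fin.
have hyz : y - z k = (y - x k.+1) + d k by rewrite /d addrA subrK.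
have hq := qnorm_expand (Tk k) (y - x k.+1) (d k) (Hsym k).2.
have hv : dotp (gf (x k.+1) - gf (z k) - Tk k *m d k) (y - x k.+1) =
   dotp (gf (x k.+1)) (y - x k.+1) - dotp (gf (z k)) (y - x k.+1)
   - dotp (Tk k *m d k) (y - x k.+1) by rewrite !dotpDl !dotpNl.
have hg := hd1 y hy1.
have hkey : `|qnorm (Tk k) (y - x k.+1)| <= eps / 2 * enorm (y - x k.+1).
  apply: le_trans (qnorm_bound k _) _.
  have he := enorm_ge0 (y - x k.+1).
  move: hy2; rewrite ltr_pdivlMr // => hy2.
  rewrite -/K' expr2; nra.
rewrite /P -/(z k) hyz [dotp _ (y - x k.+1 + d k)]dotpDr hq -/(d k) in hmin.
rewrite hv; move: hg hkey hmin; rewrite /gr !ler_norml => /andP[hg1 hg2] /andP[hk1 hk2].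
move=> hmin; lra.
Qed.


Lemma qle' k u : `|qnorm (Tk k) u| <= `|C| * N%:R * (sn u * sn u).
Proof.
apply: le_trans (qnorm_le (Tk k) C u (HC k)) _; rewrite mulrA.
apply: ler_wpM2r; first exact: sn_ge0.
apply: ler_wpM2r; first exact: sn_ge0.
by apply: ler_wpM2r => //; exact: ler_norm.
Qed.

Lemma part2 xbar : limit_point (fun k => x k.+1) xbar -> stationary Fe xbar.
Proof.
case=> phi [hphi hcv].
have phi_ge n : (n <= phi n)%N.
  elim: n => [|n IH] //; exact: leq_ltn_trans IH (hphi n).
have tds : tz (fun n => sn (d (phi n))) := tz_sub phi phi_ge d_tz.
have txs : tz (fun n => sn (x (phi n).+1 - xbar)) := cvg_tz_sn hcv.
have hzs : seq_cvg (fun n => z (phi n)) xbar.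
  apply: tz_sn_cvg; apply: tz_le (tz_add tds txs) _ => n.
  rewrite !ger0_norm ?addr_ge0 ?sn_ge0 //.
  apply: le_trans (snB3 _ _ (x (phi n).+1)) _.
  by rewrite [sn (z _ - _)]snB.
have tzs : tz (fun n => sn (z (phi n) - xbar)) := cvg_tz_sn hzs.
have tgx : tz (fun n => sn (gf (x (phi n).+1) - gf xbar)) := cvg_tz_sn (vcont_cvg Hcont hcv).
have tgz : tz (fun n => sn (gf (z (phi n)) - gf xbar)) := cvg_tz_sn (vcont_cvg Hcont hzs).
have tf : tz (fun n => f (x (phi n).+1) - f xbar) := f_cvg Hgrad hcv.
have hgb : g xbar \is a fin_num.
  rewrite fin_numE gnm /=; apply/negP => /eqP hinf.
  have ht : ((Fr 0 - f xbar + 1)%:E < g xbar)%E by rewrite hinf ltey.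
  have [dl dl0 hdl] := Hlsc xbar (Fr 0 - f xbar + 1) ht.
  have [n1 hn1] := hcv dl dl0.
  have [n2 hn2] := tf 1 ltr01.
  have h1 := hdl _ (hn1 (maxn n1 n2) (leq_maxl _ _)).
  rewrite gE lte_fin in h1.
  have h2 := hn2 (maxn n1 n2) (leq_maxr _ _).
  have h3 := @Fr_mono 0 (phi (maxn n1 n2)) (leq0n _).
  move: h2 h3; rewrite /Fr ltr_norml => /andP[h2 h2'] h3; rewrite /Fr in h1; clear hinf ht hdl; lra.
set gb := fine (g xbar).
have gbE : g xbar = gb%:E by rewrite fineK.
have tg : tz (fun n => gr (x (phi n).+1) - gb).
  pose U n := sn (gf (z (phi n))) * sn (xbar - x (phi n).+1)
     + `|C| * N%:R * (sn (xbar - z (phi n)) * sn (xbar - z (phi n)))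
     + `|C| * N%:R * (sn (d (phi n)) * sn (d (phi n))).
  apply: (@tz_upper _ _ U).
  - move=> e e0.
    have ht : ((gb - e)%:E < g xbar)%E by rewrite gbE lte_fin; lra.
    have [dl dl0 hdl] := Hlsc xbar (gb - e) ht.
    have [n hn] := hcv dl dl0; exists n => k kn.
    have := hdl _ (hn k kn); rewrite gE lte_fin; lra.
  - move=> n; have := Hmin_real (phi n) xbar (beta (phi n)) hgb.
    rewrite /P -/(z (phi n)) -/(d (phi n)).
    have -> : xbar - z (phi n) = (xbar - x (phi n).+1) + d (phi n).
      by rewrite /d addrA subrK.
    rewrite dotpDr.
    have e1 := dotp_le (gf (z (phi n))) (xbar - x (phi n).+1).
    have e2 := qle' (phi n) (xbar - x (phi n).+1 + d (phi n)).
    have e3 := qle' (phi n) (d (phi n)).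
    have -> : xbar - x (phi n).+1 + d (phi n) = xbar - z (phi n).
      by rewrite /d addrA subrK.
    move: e1 e2 e3; rewrite /U /gr -/gb !ler_norml.
    have -> : xbar - x (phi n).+1 + d (phi n) = xbar - z (phi n).
      by rewrite /d addrA subrK.
    move=> /andP[e1 e1'] /andP[e2 e2'] /andP[e3 e3'] hm; lra.
  - apply: tz_add; last exact: tz_scale (tz_mul tds tds).
    apply: tz_add.
      apply: tz_le (tz_add (tz_scale (sn (gf xbar)) txs) (tz_mul tgz txs)) _ => n.
      rewrite !ger0_norm ?addr_ge0 ?mulr_ge0 ?sn_ge0 //.
      rewrite [sn (xbar - _)]snB -mulrDl; apply: ler_wpM2r; first exact: sn_ge0.
      have -> : gf (z (phi n)) = (gf (z (phi n)) - gf xbar) + gf xbar by rewrite subrK.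
      by rewrite addrC; apply: le_trans (snD _ _) _; rewrite addrC subrK.
    apply: tz_le (tz_scale (`|C| * N%:R) (tz_mul tzs tzs)) _ => n.
    by rewrite [sn (xbar - _)]snB.
have tval : tz (fun n => fine (Fe (x (phi n).+1)) - fine (Fe xbar)).
  apply: tz_le (tz_add tf tg) _ => n.
  rewrite /Fe gE gbE -!EFinD /= /gr -/gb.
  have -> : f (x (phi n).+1) + fine (g (x (phi n).+1)) - (f xbar + gb) =
     f (x (phi n).+1) - f xbar + (fine (g (x (phi n).+1)) - gb) by ring.
  by [].
have hFfin : Fe xbar \is a fin_num by rewrite /Fe gbE -EFinD.
split => //; split => //.
exists (fun n => x (phi n).+1), (fun n => gf (x (phi n).+1) - gf (z (phi n)) - Tk (phi n) *m d (phi n)).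
split => //.
- move=> e e0; have [n hn] := tval e e0; exists n => k kn; split; last exact: hn.
  by rewrite /Fe gE -EFinD.
- by move=> k; exact: frechet.
- apply: tz_sn_cvg.
  have tT : tz (fun n => `|C| * N%:R * sn (d (phi n))) := tz_scale _ tds.
  apply: tz_le (tz_add (tz_add tgx tgz) tT) _ => n.
  rewrite (ger0_norm (sn_ge0 _)) subr0; apply: le_trans _ (ler_norm _).
  have -> : gf (x (phi n).+1) - gf (z (phi n)) - Tk (phi n) *m d (phi n) =
     (gf (x (phi n).+1) - gf xbar) + (gf xbar - gf (z (phi n))) + - (Tk (phi n) *m d (phi n)).
    by rewrite [_ + (gf xbar - _)]addrA subrK.
  apply: le_trans (snD _ _) _; rewrite snN; apply: lerD.
    by apply: le_trans (snD _ _) _; rewrite [sn (gf xbar - _)]snB.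
  apply: le_trans (sn_mulmx (Tk (phi n)) C (d (phi n)) (HC (phi n))) _.
  apply: ler_wpM2r; first exact: sn_ge0.
  by apply: ler_wpM2r => //; exact: ler_norm.
Qed.

End Main.

Theorem mainTheorem3 (R : realType) (N M : nat)
  (f : 'cV[R]_N -> R) (gf : 'cV[R]_N -> 'cV[R]_N) (g : 'cV[R]_N -> \bar R)
  (L S : 'M[R]_N) (a : R)
  (x : nat -> 'cV[R]_N) (beta : nat -> 'cV[R]_M) (D : nat -> 'M[R]_(N, M))
  (Lk Tk : nat -> 'M[R]_N) :
  proper_fun g -> lsc g ->
  is_gradient f gf -> vcontinuous gf ->
  pd L ->
  (* S = L^{1/2}, the positive definite square root of L, so invmx S = L^{-1/2} *)
  pd S -> S *m S = L ->
  (exists h : 'cV[R]_N -> 'cV[R]_N,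
      is_gradient (fun z => f (invmx S *m z)) h /\
      (forall z w, enorm (h z - h w) <= enorm (z - w))) ->
  (exists m : R, forall y, (m%:E <= (f y)%:E + g y)%E) ->
  0 < a ->
  (forall k, sym_mx (Lk k) /\ sym_mx (Tk k)) ->
  (forall k, let Phi := fun (y : 'cV[R]_N) (b : 'cV[R]_M) =>
                let z := x k + D k *m b in
                (g y + (f z + dotp (gf z) (y - z) + 2^-1 * qnorm (Tk k) (y - z))%:E)%E in
     forall y b, (Phi (x k.+1) (beta k) <= Phi y b)%E) ->
  (forall k, psd (Tk k - Lk k - a%:M)) ->
  (forall k, let z := x k + D k *m beta k in
     f (x k.+1) <= f z + dotp (gf z) (x k.+1 - z) + 2^-1 * qnorm (Lk k) (x k.+1 - z)) ->
  (exists C : R, forall k i j, `|Tk k i j| <= C) ->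
  (forall k, ((f (x k.+1))%:E + g (x k.+1) <= (f (x k))%:E + g (x k))%E) /\
  (forall xbar, limit_point (fun k => x k.+1) xbar ->
     stationary (fun y => ((f y)%:E + g y)%E) xbar).
Proof.
move=> hprop hlsc hgrad hcont _ _ _ _ [m hm] ha hsym hmin hpsd hf [C hC].
split.
- move=> k.
  by apply: (part1 f gf g a x beta D Lk Tk).
- move=> xbar hl.
  by apply: (part2 f gf g a x beta D Lk Tk m C).
Qed.
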